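(* Let $G=(V,E)$ be a strongly connected digraph with $V=\{v_1,\dots,v_n\}$. Then every evolution of the weight-balancing mirror algorithm, i.e., every sequence $(A_k)_{k\geq0}$ with $A_0\in\operatorname{Adj}(G)$ and $A_{k+1}\in g_{\mathrm{imcor}}(A_k)$ for all $k$ in which the choices satisfy the fair-decision rule, converges in finite time to a weight-balanced adjacency matrix: there exists $K$ such that $A_K$ is weight-balanced and $A_k=A_K$ for all $k\geq K$.
   Context: A digraph $G=(V,E)$ has finite vertex set $V$ and edge set $E\subseteq V\times V$; it is strongly connected if there is a directed path between every ordered pair of distinct vertices. $\mathcal{N}^{\mathrm{out}}(v_i)=\{v_j:(v_i,v_j)\in E\}$. $\operatorname{Adj}(G)$ is the set of matrices $A=(a_{ij})\in\mathbb{R}^{n\times n}_{\geq0}$ with $a_{ij}>0$ if $(v_i,v_j)\in E$ and $a_{ij}=0$ otherwise. For $A\in\operatorname{Adj}(G)$, the imbalance of $v_i$ is $\omega(v_i)=\sum_j a_{ji}-\sum_j a_{ij}$; $A$ is weight-balanced if all imbalances are zero. Let $\Omega_{\min}(v_i)=\{v_j\in\mathcal{N}^{\mathrm{out}}(v_i):\omega(v_j)=\min_{v_l\in\mathcal{N}^{\mathrm{out}}(v_i)}\omega(v_l)\}$. The map $g_{\mathrm{imcor}}:\operatorname{Adj}(G)\rightrightarrows\operatorname{Adj}(G)$ assigns to $A$ the set of all $B\in\operatorname{Adj}(G)$ such that for each $i$ there exists $j^*$ with $v_{j^*}\in\Omega_{\min}(v_i)$ and $b_{ij}=a_{ij}+\omega(v_i)$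 if $\omega(v_i)>0$ and $j=j^*$, $b_{ij}=a_{ij}$ otherwise (imbalances computed w.r.t. $A$). Fair-decision rule: when an agent with positive imbalance has more than one out-neighbor attaining the minimum imbalance, it chooses one of them, but the next time it must choose among out-neighbors with the same minimum imbalance it chooses a different (new) out-neighbor. *)

(* Defs.v *)
From HB Require Import structures.
From mathcomp Require Import all_boot all_order all_algebra.
From mathcomp Require Import reals.
Set Implicit Arguments. Unset Strict Implicit. Unset Printing Implicit Defensive.
Import Order.TTheory GRing.Theory Num.Theory.
Local Open Scope ring_scope.

(* A digraph on V = 'I_n is given by its edge relation E : rel 'I_n
   ((v_i,v_j) \in E  <->  E i j).  Self-loops are allowed. *)

Definition strongly_connected (n : nat) (E : rel 'I_n) : Prop :=
  forall i j : 'I_n, i != j -> connect E i j.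

Definition Nout (n : nat) (E : rel 'I_n) (i : 'I_n) : {set 'I_n} :=
  [set j | E i j].

Definition Adj (R : realType) (n : nat) (E : rel 'I_n) (A : 'M[R]_n) : Prop :=
  forall i j : 'I_n, (E i j -> 0 < A i j) /\ (~~ E i j -> A i j = 0).

Definition imbalance (R : realType) (n : nat) (A : 'M[R]_n) (i : 'I_n) : R :=
  \sum_(j < n) A j i - \sum_(j < n) A i j.

Definition weight_balanced (R : realType) (n : nat) (A : 'M[R]_n) : Prop :=
  forall i : 'I_n, imbalance A i = 0.

Definition Omega_min (R : realType) (n : nat) (E : rel 'I_n) (A : 'M[R]_n)
    (i : 'I_n) : {set 'I_n} :=
  [set j | E i j & [forall l, E i l ==> (imbalance A j <= imbalance A l)]].

(* B is the element of g_imcor(A) determined by the choice function c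
   (c i = j^* chosen by agent i). *)
Definition gimcor_with (R : realType) (n : nat) (E : rel 'I_n)
    (A : 'M[R]_n) (c : 'I_n -> 'I_n) (B : 'M[R]_n) : Prop :=
  Adj E B /\
  forall i : 'I_n, c i \in Omega_min E A i /\
    forall j : 'I_n,
      B i j = (if (0 < imbalance A i) && (j == c i)
               then A i j + imbalance A i else A i j).

Definition gimcor (R : realType) (n : nat) (E : rel 'I_n)
    (A B : 'M[R]_n) : Prop :=
  exists c : 'I_n -> 'I_n, gimcor_with E A c B.

(* Agent i "must choose" at time k among the tie set S = Omega_min(A_k, v_i)
   when imbalance A_k i > 0.  Considering the successive times at which agent i
   must choose among the same set S, the chosen out-neighbour is always a new
   one: it differs from each of the choices made at the previous (|S| - 1)
   occurrences of S (so choices cycle through S before any repetition).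
   When |S| = 1 the condition is vacuous. *)
Definition must_choose (R : realType) (n : nat) (E : rel 'I_n)
    (A : nat -> 'M[R]_n) (i : 'I_n) (S : {set 'I_n}) (t : nat) : bool :=
  (0 < imbalance (A t) i) && (Omega_min E (A t) i == S).

Definition fair_decision (R : realType) (n : nat) (E : rel 'I_n)
    (A : nat -> 'M[R]_n) (c : nat -> 'I_n -> 'I_n) : Prop :=
  forall (i : 'I_n) (k1 k2 : nat),
    (k1 < k2)%N ->
    let S := Omega_min E (A k1) i in
    must_choose E A i S k1 ->
    must_choose E A i S k2 ->
    (count (must_choose E A i S) (index_iota k1 k2) < #|S|)%N ->
    c k1 i != c k2 i.

(* Main.v *)
Require Import Defs.
From HB Require Import structures.
From mathcomp Require Import all_boot all_order all_algebra.
From mathcomp Require Import reals.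
From Stdlib Require Import Classical.
From mathcomp Require Import lra zify.
Set Implicit Arguments. Unset Strict Implicit. Unset Printing Implicit Defensive.
Import Order.TTheory GRing.Theory Num.Theory.

Lemma stab (f : nat -> nat) : (forall k, f k.+1 <= f k) ->
  exists K, forall k, K <= k -> f k = f K.
Proof.
move=> hf.
have mono : forall k d, f (k + d) <= f k.
  move=> k; elim=> [|d IH]; first by rewrite addn0.
  by rewrite addnS (leq_trans (hf _) IH).
suff: forall m k, f k <= m -> exists K, forall k', K <= k' -> f k' = f K.
  by move=> /(_ (f 0) 0 (leqnn _)).
elim=> [|m IH] k hk.
  exists k => k' hk'; have := mono k (k' - k); rewrite subnKC //; lia.
have [h|hn] := classic (forall k', k <= k' -> f k' = f k); first by exists k.
have [k' hk2] := not_all_ex_not _ _ hn.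
have [hk' hne] := imply_to_and _ _ hk2.
apply: (IH k'); have := mono k (k' - k); rewrite subnKC //; lia.
Qed.

Lemma fin_bound (T : finType) (P : T -> nat -> Prop) :
  (forall x, exists B, forall k, B <= k -> P x k) ->
  exists B, forall x k, B <= k -> P x k.
Proof.
move=> h.
suff: forall s : seq T, exists B, forall x k, x \in s -> B <= k -> P x k.
  by move=> /(_ (enum T)) [B hB]; exists B => x k; apply: hB; rewrite mem_enum.
elim=> [|y s [B hB]]; first by exists 0.
have [B' hB'] := h y; exists (maxn B B') => x k; rewrite inE => /orP[/eqP->|hx] hk.
  by apply: hB'; rewrite geq_max in hk; case/andP: hk.
by apply: hB => //; rewrite geq_max in hk; case/andP: hk.
Qed.

Lemma count_split (P : pred nat) k1 a b d :
  k1 <= a -> a <= b -> b <= k1 + d ->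
  count P (iota k1 d) =
  count P (iota k1 (a - k1)) + count P (iota a (b - a)) + count P (iota b (k1 + d - b)).
Proof.
move=> h1 h2 h3.
have -> : d = (a - k1) + ((b - a) + (k1 + d - b)) by lia.
rewrite !iotaD !count_cat.
have -> : k1 + (a - k1) = a by lia.
have -> : a + (b - a) = b by lia.
have -> : k1 + ((a - k1) + ((b - a) + (k1 + d - b))) - b = k1 + d - b by lia.
by rewrite addnA.
Qed.

Lemma fair_hit (T : finType) (P : pred nat) (ch : nat -> T) (S : {set T}) (u : T) (B : nat) :
  (forall k1 k2, k1 < k2 -> P k1 -> P k2 -> count P (index_iota k1 k2) < #|S| -> ch k1 != ch k2) ->
  (forall k, P k -> ch k \in S) ->
  u \in S ->
  (forall k, B <= k -> P k -> ch k != u) ->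
  (forall T', exists k, T' <= k /\ P k) -> False.
Proof.
move=> hfair hS hu hB hinf.
have [k1 [hk1 Pk1]] := hinf B.
pose f d := count P (iota k1 d).
have fS : forall d, f d.+1 = f d + P (k1 + d).
  by move=> d; rewrite /f -addn1 iotaD count_cat /= addn0.
have fmono : forall d e, f d <= f (d + e).
  by move=> d e; rewrite /f iotaD count_cat leq_addr.
have big : forall m, exists D, m <= f D.
  elim=> [|m [D hD]]; first by exists 0.
  have [k [hk Pk]] := hinf (k1 + D).
  exists (k - k1).+1; rewrite fS.
  have -> : k1 + (k - k1) = k by lia.
  rewrite Pk /=.
  have := fmono D (k - k1 - D).
  have -> : D + (k - k1 - D) = k - k1 by lia.
  lia.
have exact_ : forall D m, m <= f D -> exists d, f d = m.
  elim=> [|D IH] m hm.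
    by exists 0; rewrite /f /= in hm *; lia.
  case: (leqP m (f D)) => h; first exact: IH.
  exists D.+1; move: hm h; rewrite fS; case: (P (k1 + D)) => /=; lia.
have [D hD] := big #|S|.
have [d hd] := exact_ D _ hD.
pose L := filter P (iota k1 d).
have sizeL : size L = #|S| by rewrite size_filter.
have inL : forall k, k \in L -> [/\ P k, k1 <= k & k < k1 + d].
  by move=> k; rewrite mem_filter mem_iota => /andP[-> /andP[-> ->]].
have key : forall a b, P a -> P b -> k1 <= a -> a < b -> b < k1 + d -> ch a != ch b.
  move=> a b Pa Pb ha hab hb; apply: hfair => //.
  have hs := count_split P ha (ltnW hab) (ltnW hb).
  have : 0 < count P (iota b (k1 + d - b)).
    rewrite -has_count; apply/hasP; exists b => //; rewrite mem_iota leqnn /=; lia.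
  rewrite /index_iota; move: hd; rewrite /f; lia.
have uq : uniq (map ch L).
  rewrite map_inj_in_uniq ?filter_uniq ?iota_uniq //.
  move=> a b /inL [Pa ha1 ha2] /inL [Pb hb1 hb2] e.
  case: (ltngtP a b) => h //.
    by have := key a b Pa Pb ha1 h hb2; rewrite e eqxx.
  by have := key b a Pb Pa hb1 h ha2; rewrite e eqxx.
have sub : {subset map ch L <= enum S}.
  by move=> x /mapP [k /inL [Pk _ _] ->]; rewrite mem_enum; apply: hS.
have hsz : size (enum S) <= size (map ch L) by rewrite size_map sizeL cardE.
have [_ eqs] := uniq_min_size uq sub hsz.
have : u \in map ch L by rewrite eqs mem_enum.
case/mapP => k /inL [Pk hk _] e.
by have := hB k (leq_trans hk1 hk) Pk; rewrite -e eqxx.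
Qed.

Local Open Scope ring_scope.

Lemma upd_imb (R : realType) (n : nat) (E : rel 'I_n) (A B : 'M[R]_n) c :
  gimcor_with E A c B -> forall j,
  imbalance B j = (if 0 < imbalance A j then 0 else imbalance A j) +
     \sum_(i | (0 < imbalance A i) && (j == c i)) imbalance A i.
Proof.
move=> [_ H] j.
have col : \sum_(i < n) B i j = \sum_(i < n) A i j +
     \sum_(i | (0 < imbalance A i) && (j == c i)) imbalance A i.
  rewrite (big_mkcond (fun i => (0 < imbalance A i) && (j == c i))) -big_split /=.
  apply: eq_bigr => i _; rewrite (proj2 (H i)); by case: ifP => _; rewrite ?addr0.
have row : \sum_(l < n) B j l = \sum_(l < n) A j l +
     (if 0 < imbalance A j then imbalance A j else 0).
  have -> : \sum_(l < n) B j l = \sum_(l < n) A j l +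
     \sum_(l < n) (if (0 < imbalance A j) && (l == c j) then imbalance A j else 0).
    rewrite -big_split /=; apply: eq_bigr => l _; rewrite (proj2 (H j)).
    by case: ifP => _; rewrite ?addr0.
  case: (0 < imbalance A j) => /=; last by rewrite [X in _ + X = _]big1 ?addr0.
  by rewrite -big_mkcond big_pred1_eq.
rewrite /imbalance col row -/(imbalance A j).
case: ifP => _; rewrite /imbalance; lra.
Qed.

Lemma sum_imb0 (R : realType) (n : nat) (A : 'M[R]_n) :
  \sum_i imbalance A i = 0.
Proof. by rewrite /imbalance sumrB exchange_big subrr. Qed.

Lemma nonneg_stays (R : realType) (n : nat) (E : rel 'I_n) (A B : 'M[R]_n) c j :
  gimcor_with E A c B -> 0 <= imbalance A j -> 0 <= imbalance B j.
Proof.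
move=> H h; rewrite (upd_imb H j); apply: addr_ge0.
  by case: ifP => // /negbT; rewrite -leNgt => h'; rewrite le_eqVlt eq_sym; apply/orP; left; apply/eqP; apply/eqP; rewrite eq_le h h'.
by apply: sumr_ge0 => i /andP[/ltW].
Qed.

Lemma pos_src (R : realType) (n : nat) (E : rel 'I_n) (A B : 'M[R]_n) c j :
  gimcor_with E A c B -> 0 < imbalance B j ->
  exists i, 0 < imbalance A i /\ c i = j.
Proof.
move=> H; rewrite (upd_imb H j) => h.
have hs : 0 < \sum_(i | (0 < imbalance A i) && (j == c i)) imbalance A i.
  move: h; case: ifP; first by rewrite add0r.
  move=> /negbT; rewrite -leNgt => h1 h2; lra.
have hne : \sum_(i | (0 < imbalance A i) && (j == c i)) imbalance A i <> 0.
  by move=> e; rewrite e ltxx in hs.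
have hnn : forall i, (0 < imbalance A i) && (j == c i) -> 0 <= imbalance A i.
  by move=> i /andP[/ltW].
have [i /andP[/andP[hi /eqP ->] _]] := psumr_neq0P hnn hne.
by exists i.
Qed.

Definition posS (R : realType) (n : nat) (A : 'M[R]_n) := [set i | 0 < imbalance A i].
Definition negS (R : realType) (n : nat) (A : 'M[R]_n) := [set i | imbalance A i < 0].
Definition mu (R : realType) (n : nat) (A : 'M[R]_n) := (#|posS A| + #|negS A|)%N.

Lemma posS_sub (R : realType) (n : nat) (E : rel 'I_n) (A B : 'M[R]_n) c :
  gimcor_with E A c B -> posS B \subset c @: posS A.
Proof.
move=> H; apply/subsetP => j; rewrite inE => /(pos_src H) [i [hi <-]].
by apply: imset_f; rewrite inE.
Qed.

Lemma negS_sub (R : realType) (n : nat) (E : rel 'I_n) (A B : 'M[R]_n) c :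
  gimcor_with E A c B -> negS B \subset negS A.
Proof.
move=> H; apply/subsetP => j; rewrite !inE; apply: contraLR; rewrite -!leNgt.
exact: nonneg_stays H.
Qed.

Lemma mu_le (R : realType) (n : nat) (E : rel 'I_n) (A B : 'M[R]_n) c :
  gimcor_with E A c B -> (mu B <= mu A)%N.
Proof.
move=> H; rewrite /mu leq_add //.
  exact: leq_trans (subset_leq_card (posS_sub H)) (leq_imset_card _ _).
exact: subset_leq_card (negS_sub H).
Qed.

Lemma mu_lt (R : realType) (n : nat) (E : rel 'I_n) (A B : 'M[R]_n) c i :
  gimcor_with E A c B -> 0 < imbalance A i -> imbalance A (c i) < 0 ->
  (mu B < mu A)%N.
Proof.
move=> H hi hc; rewrite /mu.
have hP := leq_trans (subset_leq_card (posS_sub H)) (leq_imset_card c (posS A)).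
have hN := subset_leq_card (negS_sub H).
have [hb|hb] := ltP 0 (imbalance B (c i)).
  have : negS B \proper negS A.
    rewrite properE (negS_sub H) /=; apply/subsetPn; exists (c i); rewrite !inE //.
    by rewrite -leNgt ltW.
  move/proper_card => h; lia.
have : posS B \subset (c @: posS A) :\ c i.
  apply/subsetP => j hj; rewrite !inE; apply/andP; split.
    by apply: contraTneq hj => ->; rewrite inE -leNgt.
  exact: (subsetP (posS_sub H)).
move/subset_leq_card => h.
have hD := cardsD1 (c i) (c @: posS A); rewrite imset_f ?inE // in hD.
have := leq_imset_card c (posS A); lia.
Qed.

Lemma bal_step (R : realType) (n : nat) (E : rel 'I_n) (A B : 'M[R]_n) c :
  gimcor_with E A c B -> weight_balanced A -> B = A.
Proof.
move=> [_ H] hb; apply/matrixP => i j.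
by rewrite (proj2 (H i) j) hb ltxx.
Qed.

Unset Implicit Arguments.

Theorem theorem4p7 (R : realType) (n : nat) (E : rel 'I_n)
    (A : nat -> 'M[R]_n) (c : nat -> 'I_n -> 'I_n) :
  strongly_connected E ->
  Adj E (A 0%N) ->
  (forall k : nat, gimcor_with E (A k) (c k) (A k.+1)) ->
  fair_decision E A c ->
  exists K : nat, weight_balanced (A K) /\ (forall k : nat, (K <= k)%N -> A k = A K).
Proof.
move=> hSC _ hG hF.
have [K0 hK0] := stab (fun k => mu_le (hG k)).
have noNeg : forall k i, (K0 <= k)%N -> 0 < imbalance (A k) i ->
    0 <= imbalance (A k) (c k i).
  move=> k i hk hi; rewrite leNgt; apply/negP => hc.
  have := mu_lt (hG k) hi hc.
  have e1 := hK0 k hk; have e2 := hK0 k.+1 (leqW hk); simpl in e1, e2.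
  by rewrite e1 e2 ltnn.
have omin : forall k i, c k i \in Omega_min E (A k) i.
  by move=> k i; exact: (proj1 (proj2 (hG k) i)).
have G1 : forall k v l, (K0 <= k)%N -> 0 < imbalance (A k) v -> E v l ->
    0 <= imbalance (A k) l.
  move=> k v l hk hv hl.
  have := omin k v; rewrite inE => /andP[_ /forallP /(_ l)]; rewrite hl /= => hle.
  exact: le_trans (noNeg _ _ hk hv) hle.
have G2 : forall k j, (K0 <= k)%N -> imbalance (A k) j < 0 ->
    imbalance (A k.+1) j = imbalance (A k) j.
  move=> k j hk hj; rewrite (upd_imb (hG k) j) ifN; last by rewrite -leNgt ltW.
  rewrite big_pred0 ?addr0 // => i; apply/negP => /andP[hi /eqP e].
  by have := noNeg _ _ hk hi; rewrite -e leNgt hj.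
have G3 : forall k v, 0 < imbalance (A k) v -> 0 <= imbalance (A k) (c k v) ->
    0 < imbalance (A k.+1) (c k v).
  move=> k v hv hu; rewrite (upd_imb (hG k) (c k v)).
  rewrite (bigD1 v) /=; last by rewrite hv eqxx.
  rewrite addrCA; apply: (lt_le_trans hv); rewrite lerDl; apply: addr_ge0.
    by case: ifP.
  by apply: sumr_ge0 => i /andP[/andP[/ltW]].
have bal0 : weight_balanced (A K0).
  apply: NNPP => hnb.
  have [z hz] : exists z, imbalance (A K0) z < 0.
    apply: NNPP => hno; apply: hnb => i.
    have hge : forall j, true -> 0 <= imbalance (A K0) j.
      by move=> j _; rewrite leNgt; apply/negP => hj; apply: hno; exists j.
    exact: (psumr_eq0P hge (sum_imb0 (A K0))).
  have negz : forall d, imbalance (A (K0 + d)%N) z = imbalance (A K0) z.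
    elim=> [|d IH]; first by rewrite addn0.
    by rewrite addnS G2 ?leq_addr // IH.
  pose Q v := exists T, forall k, (T <= k)%N -> imbalance (A k) v <= 0.
  have Qz : Q z.
    exists K0 => k hk; rewrite -(subnKC hk) negz; exact: ltW.
  have step : forall v u, E v u -> Q u -> Q v.
    move=> v u evu [T hT].
    apply: NNPP => hnQ.
    pose T1 := maxn T K0.
    have hinf : forall T', exists k, (T' <= k)%N /\ 0 < imbalance (A k) v.
      move=> T'; apply: NNPP => h; apply: hnQ; exists T' => k hk.
      rewrite leNgt; apply/negP => hv; apply: h; by exists k.
    have hkey : forall k, (T1 <= k)%N -> 0 < imbalance (A k) v ->
        u \in Omega_min E (A k) v /\ c k v != u.
      move=> k hk hv.
      have hkT : (T <= k)%N by rewrite geq_max in hk; case/andP: hk.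
      have hkK : (K0 <= k)%N by rewrite geq_max in hk; case/andP: hk.
      have hu0 : imbalance (A k) u = 0.
        by apply/eqP; rewrite eq_le hT // (G1 k v u hkK hv evu).
      split.
        rewrite inE evu /=; apply/forallP => l; apply/implyP => hl.
        by rewrite hu0; exact: (G1 k v l hkK hv hl).
      apply/eqP => e.
      have := G3 k v hv; rewrite e hu0 lexx => /(_ isT) hpos.
      by have := hT k.+1 (leqW hkT); rewrite leNgt hpos.
    have [S hS] : exists S, forall B, exists k, (B <= k)%N /\ must_choose E A v S k.
      apply: NNPP => hno.
      have hb : forall S, exists B, forall k, (B <= k)%N -> ~~ must_choose E A v S k.
        move=> S; apply: NNPP => h1; apply: hno; exists S => B; apply: NNPP => h2.
        apply: h1; exists B => k hk; apply/negP => hm; apply: h2; exists k; by split.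
      have [B hB] := fin_bound hb.
      have [k [hk hv]] := hinf B.
      have := hB (Omega_min E (A k) v) k hk; by rewrite /must_choose hv eqxx.
    have huS : u \in S.
      have [k [hk /andP[hv /eqP eS]]] := hS T1.
      by rewrite -eS; case: (hkey k hk hv).
    apply: (fair_hit (P:=must_choose E A v S) (ch:=fun k => c k v) (S:=S) (u:=u) (B:=T1)) => //.
    - move=> k1 k2 hlt Pk1 Pk2 hcnt.
      have h := hF v k1 k2 hlt; simpl in h.
      have eS : Omega_min E (A k1) v = S by case/andP: Pk1 => _ /eqP.
      rewrite eS in h; exact: h.
    - by move=> k /andP[_ /eqP <-]; apply: omin.
    - by move=> k hk /andP[hv _]; case: (hkey k hk hv).
  have allQ : forall v, Q v.
    move=> v; case: (eqVneq v z) => [e|hvz]; first by subst.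
    have /connectP [p hp hl] := hSC v z hvz.
    elim: p v hp hl {hvz} => [|x p IH] v /=; first by move=> _ <-.
    move=> /andP[evx hp] hl; apply: (step v x evx); exact: IH.
  have [B hB] := fin_bound (P := fun v k => imbalance (A k) v <= 0) allQ.
  pose k := maxn B K0.
  have hsum := sum_imb0 (A k).
  rewrite (bigD1 z) //= in hsum.
  have hzk : imbalance (A k) z < 0.
    have hk : (K0 <= k)%N by rewrite leq_maxr.
    by rewrite -(subnKC hk) negz.
  have hrest : \sum_(i < n | i != z) imbalance (A k) i <= 0.
    by apply: sumr_le0 => i _; apply: hB; rewrite leq_maxl.
  lra.
exists K0; split => //.
have : forall d, A (K0 + d)%N = A K0.
  elim=> [|d IH]; first by rewrite addn0.
  by rewrite addnS (bal_step (hG _)) // IH.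
by move=> h k hk; rewrite -(subnKC hk) h.
Qed.
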